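(* Let $G$ be a DAG and $k,r,L$ positive integers. Suppose that every SPP pebbling strategy of $G$ with fast memory of size $k\cdot r$ uses at least $L$ I/O operations. Then every MPP pebbling strategy of $G$ with $k$ processors, each having fast memory of size $r$, contains at least $L/k$ I/O steps (applications of rules (R1) and (R2)).
   Context: Single-processor red-blue pebbling (SPP) with fast memory size $r$ on a DAG $G=(V,E)$: a state is a pair $(R,B)$ of subsets of $V$ (red and blue pebbles), starting with both empty. Rules: (R1-S) place a red pebble on a node carrying a blue pebble; (R2-S) place a blue pebble on a node carrying a red pebble; (R3-S) place a red pebble on a node all of whose in-neighbors carry red pebbles (in particular on any source); (R4-S) remove any pebble. At all times $|R|\le r$; a strategy must end in a state where every sink carries a pebble. Its I/O cost is the number of applications of (R1-S) and (R2-S). Multiprocessor red-blue pebbling (MPP). Input: a DAG $G=(V,E)$ with $n=|V|$ and positive integers $k$ (number of processors), $r$ (fast-memory size per processor), $g$ (cost of an I/O step). $\Delta_{in}$ denotes the maximum in-degree of $G$; sources/sinks are nodes of in-degree/out-degree $0$. A configuration is a tuple $(R^1,\dots,R^k,B)$ of subsets of $V$ ($R^j$ = nodes carrying a red pebble of processor $j$, $B$ = nodes carrying a blue pebble); it is valid if $|R^j|\le r$ for all $j$. The initial configuration has all sets empty; a configuration is terminal if every sink lies in $B\cup\bigcup_j R^j$. The transition rules are: (R1) for some $m\le k$, pairwise distinct processors $j_1,\dots,j_m$ and nodes $v_1,\dots,v_m$ with $v_i\in R^{j_i}$, add each $v_i$ to $B$ (cost $g$); (R2) for some $m\le k$, pairwise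 distinct processors $j_1,\dots,j_m$ and nodes $v_1,\dots,v_m\in B$, add each $v_i$ to $R^{j_i}$ (cost $g$); (R3) for some $m\le k$, pairwise distinct processors $j_1,\dots,j_m$ and nodes $v_1,\dots,v_m$ such that every in-neighbor of $v_i$ lies in $R^{j_i}$, add each $v_i$ to $R^{j_i}$ (cost $1$); (R4) remove a single red or blue pebble (cost $0$). A pebbling strategy is a sequence of valid configurations starting at the initial configuration and ending at a terminal one, each obtained from its predecessor by one rule; its cost is the sum of the costs of the rules applied. $\mathrm{OPT}$ denotes the minimum cost of a pebbling strategy. Applications of (R1),(R2) are called I/O steps and applications of (R3) compute steps. *)

(* Defs.v *)
From mathcomp Require Import all_boot all_order all_algebra.
Set Implicit Arguments. Unset Strict Implicit. Unset Printing Implicit Defensive.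

Section Pebbling.
Variables (V : finType) (e : rel V).

Definition dag : Prop :=
  forall (x : V) (p : seq V), p != [::] -> path e x p -> last x p != x.

Definition sink (v : V) : bool := [forall w, ~~ e v w].
Definition preds_in (v : V) (A : {set V}) : bool := [forall u, e u v ==> (u \in A)].

Definition sstate := ({set V} * {set V})%type.

Inductive smove :=
| SLoad of V
| SStore of V
| SComp of V
| SDelR of V
| SDelB of V.

Definition spp_step (st : sstate) (m : smove) : option sstate :=
  let: (R, B) := st in
  match m with
  | SLoad v => if v \in B then Some (v |: R, B) else None
  | SStore v => if v \in R then Some (R, v |: B) else None
  | SComp v => if preds_in v R then Some (v |: R, B) else None
  | SDelR v => if v \in R then Some (R :\ v, B) else None
  | SDelB v => if v \in B then Some (R, B :\ v) else None
  end.

Fixpoint spp_run (r : nat) (st : sstate) (ms : seq smove) : option sstate :=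
  match ms with
  | [::] => Some st
  | m :: ms' =>
      match spp_step st m with
      | Some st' => if #|st'.1| <= r then spp_run r st' ms' else None
      | None => None
      end
  end.

Definition sterminal (st : sstate) : bool :=
  [forall v, sink v ==> (v \in st.1 :|: st.2)].

Definition spp_strategy (r : nat) (ms : seq smove) : bool :=
  if spp_run r (set0, set0) ms is Some st then sterminal st else false.

Definition sis_io (m : smove) : bool :=
  match m with SLoad _ | SStore _ => true | _ => false end.

Definition spp_io (ms : seq smove) : nat := count sis_io ms.

Variable k : nat.

Definition mconf := ({ffun 'I_k -> {set V}} * {set V})%type.

(* A parallel step is given by a partial assignment processor -> node; the
   processors j with f j = Some v are the pairwise distinct j_1..j_m (m >= 1). *)
Inductive mmove :=
| MStore of {ffun 'I_k -> option V}
| MLoad of {ffun 'I_k -> option V}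
| MComp of {ffun 'I_k -> option V}
| MDelR of 'I_k & V
| MDelB of V.

Definition nonempty_sel (f : {ffun 'I_k -> option V}) : bool :=
  [exists j, f j != None].

Definition sel_ok (f : {ffun 'I_k -> option V}) (P : 'I_k -> V -> bool) : bool :=
  [forall j, if f j is Some v then P j v else true].

Definition add_red (R : {ffun 'I_k -> {set V}}) (f : {ffun 'I_k -> option V}) :=
  [ffun j => if f j is Some v then v |: R j else R j].

Definition mpp_step (c : mconf) (m : mmove) : option mconf :=
  let: (R, B) := c in
  match m with
  | MStore f =>
      if nonempty_sel f && sel_ok f (fun j v => v \in R j)
      then Some (R, B :|: [set v | [exists j, f j == Some v]]) else None
  | MLoad f =>
      if nonempty_sel f && sel_ok f (fun _ v => v \in B)
      then Some (add_red R f, B) else None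
  | MComp f =>
      if nonempty_sel f && sel_ok f (fun j v => preds_in v (R j))
      then Some (add_red R f, B) else None
  | MDelR j v =>
      if v \in R j then Some ([ffun i => if i == j then R i :\ v else R i], B)
      else None
  | MDelB v => if v \in B then Some (R, B :\ v) else None
  end.

Definition mvalid (r : nat) (c : mconf) : bool := [forall j, #|c.1 j| <= r].

Fixpoint mpp_run (r : nat) (c : mconf) (ms : seq mmove) : option mconf :=
  match ms with
  | [::] => Some c
  | m :: ms' =>
      match mpp_step c m with
      | Some c' => if mvalid r c' then mpp_run r c' ms' else None
      | None => None
      end
  end.

Definition minit : mconf := ([ffun _ => set0], set0).

Definition mterminal (c : mconf) : bool :=
  [forall v, sink v ==> ((v \in c.2) || [exists j, v \in c.1 j])].

Definition mpp_strategy (r : nat) (ms : seq mmove) : bool :=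
  if mpp_run r minit ms is Some c then mterminal c else false.

Definition mis_io (m : mmove) : bool :=
  match m with MStore _ | MLoad _ => true | _ => false end.

Definition mpp_io (ms : seq mmove) : nat := count mis_io ms.

End Pebbling.

(* Main.v *)
Require Import Defs.
From mathcomp Require Import all_boot all_order all_algebra.
Import GRing.Theory Num.Theory.

Section Sim.
Local Set Implicit Arguments.
Variables (V : finType) (e : rel V) (k : nat).

Definition UU (R : {ffun 'I_k -> {set V}}) : {set V} := \bigcup_(j : 'I_k) R j.
Definition vs (f : {ffun 'I_k -> option V}) : seq V := pmap (fun j => f j) (enum 'I_k).

Lemma spp_run_cat c st ms1 ms2 st1 :
  spp_run e c st ms1 = Some st1 -> spp_run e c st (ms1 ++ ms2) = spp_run e c st1 ms2.
Proof.
elim: ms1 st => [|m ms IH] st /=; first by case=> ->.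
case: (spp_step e st m) => // st'; case: ifP => // _; exact: IH.
Qed.

Lemma setin_nil : [set x in [::]] = set0 :> {set V}.
Proof. by apply/setP=> x; rewrite !inE. Qed.

Lemma preds_in_mono v (R R' : {set V}) : R \subset R' -> preds_in e v R -> preds_in e v R'.
Proof.
move=> /subsetP s /forallP h; apply/forallP=> u; apply/implyP=> /(implyP (h u)); exact: s.
Qed.

Lemma setU_cons (R : {set V}) v (l : seq V) :
  (v |: R) :|: [set x in l] = R :|: [set x in v :: l].
Proof.
apply/setP=> x; rewrite !inE.
by case: (x == v); case: (x \in R).
Qed.

Lemma load_run c (l : seq V) (R B : {set V}) : {subset l <= B} -> #|R :|: [set x in l]| <= c ->
  spp_run e c (R, B) (map (@SLoad V) l) = Some (R :|: [set x in l], B).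
Proof.
elim: l R => [|v l IH] R /= sub hc; first by rewrite setin_nil setU0.
rewrite (sub v (mem_head _ _)) /=.
have hs : #|v |: R| <= c.
  apply: leq_trans hc; apply: subset_leq_card; apply/subsetP=> x.
  by rewrite !inE => /orP[->|->]; rewrite ?orbT.
rewrite hs IH ?setU_cons //.
by move=> x hx; apply: sub; rewrite inE hx orbT.
Qed.

Lemma comp_run c (l : seq V) (R B : {set V}) : {in l, forall v, preds_in e v R} ->
  #|R :|: [set x in l]| <= c ->
  spp_run e c (R, B) (map (@SComp V) l) = Some (R :|: [set x in l], B).
Proof.
elim: l R => [|v l IH] R /= sub hc; first by rewrite setin_nil setU0.
rewrite (sub v (mem_head _ _)) /=.
have hs : #|v |: R| <= c.
  apply: leq_trans hc; apply: subset_leq_card; apply/subsetP=> x.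
  by rewrite !inE => /orP[->|->]; rewrite ?orbT.
rewrite hs IH ?setU_cons //.
move=> x hx; apply: (@preds_in_mono _ R); first exact: subsetUr.
by apply: sub; rewrite inE hx orbT.
Qed.

Lemma store_run c (l : seq V) (R B : {set V}) : {subset l <= R} -> #|R| <= c ->
  spp_run e c (R, B) (map (@SStore V) l) = Some (R, B :|: [set x in l]).
Proof.
elim: l B => [|v l IH] B /= sub hc; first by rewrite setin_nil setU0.
rewrite (sub v (mem_head _ _)) /= hc IH //.
  congr (Some (R, _)); apply/setP=> x; rewrite !inE.
  by case: (x == v); case: (x \in B).
by move=> x hx; apply: sub; rewrite inE hx orbT.
Qed.

Lemma mem_vs f x : (x \in vs f) = [exists j, f j == Some x].
Proof.
rewrite mem_pmap; apply/mapP/existsP => [[j _ h]|[j /eqP h]].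
  by exists j; rewrite -h.
by exists j; rewrite ?mem_enum ?h.
Qed.

Lemma size_vs f : size (vs f) <= k.
Proof. by rewrite size_pmap; apply: leq_trans (count_size _ _) _; rewrite size_enum_ord. Qed.

Lemma UU_add_red R f : UU (add_red R f) = UU R :|: [set x in vs f].
Proof.
apply/setP=> x; rewrite in_setU inE mem_vs; apply/bigcupP/orP.
  case=> j _; rewrite ffunE; case E: (f j) => [v|].
    rewrite !inE => /orP[/eqP->|h].
      by right; apply/existsP; exists j; rewrite E.
    by left; apply/bigcupP; exists j.
  by move=> h; left; apply/bigcupP; exists j.
case=> [/bigcupP[j _ h] | /existsP[j /eqP E]].
  by exists j => //; rewrite ffunE; case: (f j) => [v|] //; rewrite !inE h orbT.
by exists j => //; rewrite ffunE E !inE eqxx.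
Qed.

Lemma card_UU r (c : mconf V k) : mvalid r c -> #|UU c.1| <= k * r.
Proof.
move=> /forallP h.
have H : #|UU c.1| <= \sum_(j : 'I_k) #|c.1 j|.
  rewrite /UU; apply: (big_ind2 (fun (A : {set V}) n => #|A| <= n)) => //.
  - by rewrite cards0.
  - move=> A a B b ha hb; apply: leq_trans (leq_card_setU _ _) _; exact: leq_add.
apply: leq_trans H _.
have H2 : \sum_(j : 'I_k) #|c.1 j| <= \sum_(j : 'I_k) r by apply: leq_sum => j _; exact: h.
apply: leq_trans H2 _.
by rewrite sum_nat_const card_ord.
Qed.

Lemma io_map (g : V -> smove V) l : (forall v, sis_io (g v)) -> spp_io (map g l) = size l.
Proof.
move=> h; rewrite /spp_io count_map -[RHS]count_predT; apply: eq_count => x; exact: h.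
Qed.

Lemma io_map0 (g : V -> smove V) l : (forall v, ~~ sis_io (g v)) -> spp_io (map g l) = 0.
Proof.
move=> h; elim: l => [|v l IH] //; rewrite /spp_io /= (negbTE (h v)) add0n; exact: IH.
Qed.

Lemma step_sim r (c : mconf V k) m c' : mpp_step e c m = Some c' -> mvalid r c' ->
  exists sms, spp_run e (k * r) (UU c.1, c.2) sms = Some (UU c'.1, c'.2)
              /\ spp_io sms <= k * mis_io m.
Proof.
case: c => R B; case: m => [f|f|f|j v|v] /=.
- case: ifP => // /andP[_ /forallP ok] [<-] hv.
  exists (map (@SStore V) (vs f)); split.
    rewrite store_run.
    + congr (Some (_, _)); apply/setP=> x; rewrite !inE mem_vs //.
    + move=> x; rewrite mem_vs => /existsP[j /eqP E]; have := ok j; rewrite E => h.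
      by apply/bigcupP; exists j.
    + by have := @card_UU r _ hv.
  by rewrite io_map // muln1 size_vs.
- case: ifP => // /andP[_ /forallP ok] [<-] hv.
  exists (map (@SLoad V) (vs f)); split.
    have hc := @card_UU r _ hv; rewrite /= UU_add_red in hc.
    rewrite load_run ?UU_add_red //.
    move=> x; rewrite mem_vs => /existsP[j /eqP E]; have := ok j; rewrite E //.
  by rewrite io_map // muln1 size_vs.
- case: ifP => // /andP[_ /forallP ok] [<-] hv.
  exists (map (@SComp V) (vs f)); split.
    have hc := @card_UU r _ hv; rewrite /= UU_add_red in hc.
    rewrite comp_run ?UU_add_red //.
    move=> x; rewrite mem_vs => /existsP[i /eqP E]; have := ok i; rewrite E => h.
    apply: (preds_in_mono _ _ h); apply/subsetP=> y hy; apply/bigcupP; exists i => //.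
  by rewrite io_map0.
- case: ifP => // hvj [<-] hval.
  set R' := [ffun i => _].
  have sub1 : UU R' \subset UU R.
    apply/subsetP=> x /bigcupP[i _]; rewrite /R' ffunE; case: (i == j).
      by rewrite inE => /andP[_ h]; apply/bigcupP; exists i.
    by move=> h; apply/bigcupP; exists i.
  have sub2 : forall x, x != v -> x \in UU R -> x \in UU R'.
    move=> x xv /bigcupP[i _ h]; apply/bigcupP; exists i => //.
    by rewrite /R' ffunE; case: (i == j); rewrite ?inE ?xv.
  case: (boolP (v \in UU R')) => hin.
    exists [::]; split => //; congr (Some (_, _)); apply/eqP; rewrite eqEsubset sub1 andbT.
    apply/subsetP=> x hx; case: (eqVneq x v) => [->|xv] //; exact: sub2.
  exists [:: SDelR v]; split => //=.
  have -> : v \in UU R by apply/bigcupP; exists j.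
  have -> : UU R :\ v = UU R'.
    apply/eqP; rewrite eqEsubset; apply/andP; split.
      by apply/subsetP=> x; rewrite !inE => /andP[xv hx]; exact: sub2.
    apply/subsetP=> x hx; rewrite !inE (subsetP sub1 _ hx) andbT.
    by apply: contraNneq hin => <-.
  by rewrite /= (@card_UU r (R', B) hval).
- case: ifP => // hv [<-] hval.
  exists [:: SDelB v]; split => //=.
  by rewrite hv /= (@card_UU r (R, B :\ v) hval).
Qed.

Lemma run_sim r ms (c c' : mconf V k) : mpp_run e r c ms = Some c' ->
  exists sms, spp_run e (k * r) (UU c.1, c.2) sms = Some (UU c'.1, c'.2)
              /\ spp_io sms <= k * mpp_io ms.
Proof.
elim: ms c => [|m ms IH] c /=.
  by case=> <-; exists [::].
case E: (mpp_step e c m) => [c1|] //; case: ifP => // hv /IH [s2 [h2 io2]].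
have [s1 [h1 io1]] := @step_sim r c m c1 E hv.
exists (s1 ++ s2); rewrite (@spp_run_cat (k * r) _ s1 s2 _ h1) h2; split => //.
by rewrite /spp_io count_cat mulnDr leq_add.
Qed.

End Sim.

Local Open Scope ring_scope.

Theorem lemma5 (V : finType) (e : rel V) (k r L : nat) :
  dag e -> (0 < k)%N -> (0 < r)%N -> (0 < L)%N ->
  (forall ms : seq (smove V), spp_strategy e (k * r) ms -> (L <= spp_io ms)%N) ->
  forall ms : seq (mmove V k), mpp_strategy e r ms ->
    (L%:R / k%:R : rat) <= (mpp_io ms)%:R.
Proof.
move=> _ k0 _ _ hS ms.
rewrite /mpp_strategy; case E: (mpp_run e r (minit V k) ms) => [c|] // ht.
have [sms [h io]] := @run_sim V e k r ms _ _ E.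
have h0 : UU (minit V k).1 = set0.
  apply/setP=> x; rewrite inE; apply/bigcupP => [[j _]]; by rewrite ffunE inE.
have hs : spp_strategy e (k * r) sms.
  rewrite h0 /= in h; rewrite /spp_strategy h.
  apply/forallP=> v; apply/implyP=> sv; have := forallP ht v; rewrite sv /=.
  case/orP=> [hb | /existsP[j hj]]; rewrite inE ?hb ?orbT //.
  by apply/orP; left; apply/bigcupP; exists j.
have := leq_trans (hS _ hs) io.
rewrite ler_pdivrMr ?ltr0n // -natrM ler_nat mulnC //.
Qed.
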